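(* Let $U:\mathbb R^m_{++}\to\mathbb R$ be a concave NDAS function and let $s^{opt}$ be a maximizer of $U$ over $B_s$. For $i=0,\dots,k$ let $w^i\in W$ have weighted center $(x^i,y^i,s^i)$, let $g^i$ be a supergradient of $U$ at $s^i$, set $g^{iw}=(Y^i)^{-1}g^i$ and $W^i:=\{w:(g^{iw})^\top(w-w^i)\ge0\}\cap W$. Assume $w^i\in\mathrm{relint}\bigl(\bigcap_{j=0}^{i-1}W^j\bigr)$ for $i=1,\dots,k$. Then $$\Bigl(\bigcap_{j=0}^k W^j\Bigr)\cap W_{s^{opt}}\neq\emptyset.$$
   Context: Let $A\in\mathbb R^{m\times n}$ have full column rank $n\le m$ and $b\in\mathbb R^m$ be such that $\{x:Ax\le b\}$ is bounded with nonempty interior. For $w\in\mathbb R^m_{++}$ the weighted center of $w$ is the unique $(x,y,s)$ with $Ax+s=b$, $s>0$, $A^\top y=0$, $\mathrm{Diag}(s)y=w$ ($s$-vector $s$, $y$-vector $y$). Capital letters denote diagonal matrices of vectors. $W=\{w\in\mathbb R^m:w>0,\ e^\top w=1\}$. Centric $s$-vectors are $s$-vectors of weighted centers of elements of $W$; $B_s$ is their set; for centric $s$, $W_s=\{w\in W:$ the $s$-vector of $w$ is $s\}$. Supergradient of concave $U$ at $s^0$: $g$ with $U(s)\le U(s^0)+g^\top(s-s^0)$ for all $s$. A function $f:\mathbb R^m_{++}\to\mathbb R$ is NDAS if for every $d\in\mathbb R^m_{++}$, with $D=\mathrm{Diag}(d)$: (1) $f(s)\le\max\{f(Ds),f(D^{-1}s)\}$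 for all $s\in\mathbb R^m_{++}$; (2) if $f(s^0)\le f(Ds^0)$ for a single $s^0\in\mathbb R^m_{++}$, then $f(s)\le f(Ds)$ for all $s\in\mathbb R^m_{++}$. *)

(* Defs.v *)
From Stdlib Require Import Reals.
From mathcomp Require Import ssreflect ssrbool ssrfun eqtype ssrnat seq fintype bigop.
Set Implicit Arguments. Unset Strict Implicit. Unset Printing Implicit Defensive.
Open Scope R_scope.

Definition vec (m : nat) := 'I_m -> R.

Definition sumR (m : nat) (f : 'I_m -> R) : R := \big[Rplus/0]_(i < m) f i.
Definition dot (m : nat) (u v : vec m) : R := sumR (fun i => u i * v i).

Definition matvec m n (A : 'I_m -> 'I_n -> R) (x : vec n) : vec m :=
  fun i => sumR (fun j => A i j * x j).
Definition tmatvec m n (A : 'I_m -> 'I_n -> R) (y : vec m) : vec n :=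
  fun j => sumR (fun i => A i j * y i).

Definition pos m (s : vec m) : Prop := forall i, 0 < s i.

Definition full_col_rank m n (A : 'I_m -> 'I_n -> R) : Prop :=
  forall x : vec n, (forall i, matvec A x i = 0) -> forall j, x j = 0.

Definition in_poly m n (A : 'I_m -> 'I_n -> R) (b : vec m) (x : vec n) : Prop :=
  forall i, matvec A x i <= b i.

Definition poly_bounded m n (A : 'I_m -> 'I_n -> R) (b : vec m) : Prop :=
  exists M, forall x, in_poly A b x -> forall j, Rabs (x j) <= M.

Definition poly_nonempty_interior m n (A : 'I_m -> 'I_n -> R) (b : vec m) : Prop :=
  exists (x0 : vec n) (eps : R), 0 < eps /\
    forall x : vec n, (forall j, Rabs (x j - x0 j) < eps) -> in_poly A b x.

Definition weighted_center m n (A : 'I_m -> 'I_n -> R) (b : vec m)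
    (w : vec m) (x : vec n) (y s : vec m) : Prop :=
  (forall i, matvec A x i + s i = b i) /\ pos s /\
  (forall j, tmatvec A y j = 0) /\ (forall i, s i * y i = w i).

Definition inW m (w : vec m) : Prop := pos w /\ sumR w = 1.

(* s is the s-vector of the weighted center of w
   (well defined since the weighted center is unique) *)
Definition svec_of m n (A : 'I_m -> 'I_n -> R) (b : vec m) (w s : vec m) : Prop :=
  exists (x : vec n) (y : vec m), weighted_center A b w x y s.

Definition in_Bs m n (A : 'I_m -> 'I_n -> R) (b : vec m) (s : vec m) : Prop :=
  exists w, inW w /\ svec_of A b w s.

Definition in_Ws m n (A : 'I_m -> 'I_n -> R) (b : vec m) (s w : vec m) : Prop :=
  inW w /\ svec_of A b w s.

Definition concave_pos m (U : vec m -> R) : Prop :=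
  forall (s t : vec m) (l : R), pos s -> pos t -> 0 <= l <= 1 ->
    l * U s + (1 - l) * U t <= U (fun i => l * s i + (1 - l) * t i).

Definition supergradient m (U : vec m -> R) (s0 g : vec m) : Prop :=
  forall s : vec m, pos s -> U s <= U s0 + dot g (fun i => s i - s0 i).

Definition Dmul m (d s : vec m) : vec m := fun i => d i * s i.
Definition Dinv m (d s : vec m) : vec m := fun i => s i / d i.

Definition NDAS m (f : vec m -> R) : Prop :=
  forall d : vec m, pos d ->
    (forall s, pos s -> f s <= Rmax (f (Dmul d s)) (f (Dinv d s))) /\
    ((exists s0, pos s0 /\ f s0 <= f (Dmul d s0)) ->
       forall s, pos s -> f s <= f (Dmul d s)).

Definition maximizer_Bs m n (A : 'I_m -> 'I_n -> R) (b : vec m) (U : vec m -> R)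
    (sopt : vec m) : Prop :=
  in_Bs A b sopt /\ forall s, in_Bs A b s -> U s <= U sopt.

Definition aff_hull m (C : vec m -> Prop) (z : vec m) : Prop :=
  exists (p : nat) (P : 'I_p -> vec m) (c : 'I_p -> R),
    (forall j, C (P j)) /\ sumR c = 1 /\
    forall i, z i = sumR (fun j => c j * P j i).

Definition relint m (C : vec m -> Prop) (x : vec m) : Prop :=
  C x /\ exists eps, 0 < eps /\
    forall z, aff_hull C z -> (forall i, Rabs (z i - x i) < eps) -> C z.

Definition Wcut m (gj yj wj : vec m) (w : vec m) : Prop :=
  inW w /\ 0 <= dot (fun i => gj i / yj i) (fun i => w i - wj i).

(* Main.v *)
Require Import Defs.
From HB Require Import structures.
From Stdlib Require Import Reals Lra Psatz FunctionalExtensionality.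
From mathcomp Require Import ssreflect ssrbool ssrfun eqtype ssrnat seq fintype bigop.
Open Scope R_scope.
HB.instance Definition _ := Monoid.isComLaw.Build R 0 Rplus (fun a b c => esym (Rplus_assoc a b c)) Rplus_comm Rplus_0_l.
Lemma sumR_add m (f g : 'I_m -> R) : sumR (fun i => f i + g i) = sumR f + sumR g.
Proof. by rewrite /sumR big_split. Qed.
Lemma sumR_scal m c (f : 'I_m -> R) : sumR (fun i => c * f i) = c * sumR f.
Proof. rewrite /sumR. elim/big_rec2: _ => [|i a b _ ->]; lra. Qed.
Lemma sumR_ext m (f g : 'I_m -> R) : (forall i, f i = g i) -> sumR f = sumR g.
Proof. by move=> H; rewrite /sumR; apply: eq_bigr => i _. Qed.
Lemma sumR_exch m n (F : 'I_m -> 'I_n -> R) : sumR (fun i => sumR (fun j => F i j)) = sumR (fun j => sumR (fun i => F i j)).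
Proof. by rewrite /sumR exchange_big. Qed.

Lemma center_sum m n (A : 'I_m -> 'I_n -> R) (b : vec m) (x' : vec n) (y' s' : vec m)
  (x : vec n) (s : vec m) :
  (forall j, tmatvec A y' j = 0) -> (forall i, matvec A x i + s i = b i) ->
  sumR (fun i => s i * y' i) = sumR (fun i => b i * y' i).
Proof.
move=> Hy Hx.
have -> : (fun i => s i * y' i) = (fun i => b i * y' i + (- 1) * (matvec A x i * y' i)).
  by apply: functional_extensionality => i; rewrite -(Hx i); ring.
rewrite sumR_add sumR_scal.
have -> : sumR (fun i => matvec A x i * y' i) = 0; last by ring.
rewrite /matvec.
have -> : (fun i => sumR (fun j => A i j * x j) * y' i) = (fun i => sumR (fun j => x j * (A i j * y' i))).
  apply: functional_extensionality => i.
  rewrite Rmult_comm -sumR_scal; apply: sumR_ext => j; ring.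
rewrite sumR_exch.
rewrite (@sumR_ext _ _ (fun j => 0 * x j)); last first.
  move=> j; rewrite sumR_scal; have := Hy j; rewrite /tmatvec => H.
  rewrite H; ring.
rewrite sumR_scal; ring.
Qed.

Theorem proposition3p2 (m n : nat) (A : 'I_m -> 'I_n -> R) (b : vec m)
  (Hnm : (n <= m)%N) (Hrank : full_col_rank A)
  (Hbdd : poly_bounded A b) (Hint : poly_nonempty_interior A b)
  (U : vec m -> R) (HUc : concave_pos U) (HUn : NDAS U)
  (sopt : vec m) (Hopt : maximizer_Bs A b U sopt)
  (k : nat) (w : nat -> vec m) (x : nat -> vec n) (y s g : nat -> vec m)
  (Hw : forall i, (i <= k)%N -> inW (w i))
  (Hc : forall i, (i <= k)%N -> weighted_center A b (w i) (x i) (y i) (s i))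
  (Hg : forall i, (i <= k)%N -> supergradient U (s i) (g i))
  (Hrel : forall i, (1 <= i)%N -> (i <= k)%N ->
     relint (fun v => forall j, (j < i)%N -> Wcut (g j) (y j) (w j) v) (w i)) :
  exists v : vec m,
    (forall j, (j <= k)%N -> Wcut (g j) (y j) (w j) v) /\ in_Ws A b sopt v.
Proof.
have ypos : forall j, (j <= k)%N -> Defs.pos (y j).
  move=> j hj i; have [_ [Hs [_ Hsy]]] := Hc j hj; have [Hwp _] := Hw j hj.
  have := Hwp i; rewrite -Hsy => H.
  have := Hs i => H2.
  destruct (Rle_or_lt (y j i) 0) as [H3|H3] => //.
  have : s j i * y j i <= 0 by nra.
  lra.
pose ge j l := forall t, Defs.pos t -> U t <= U (fun i => y j i / y l i * t i).
have tr : forall j l p, (l <= k)%N -> (p <= k)%N -> ge j l -> ge l p -> ge j p.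
  move=> j l p hl hp H1 H2 t ht.
  apply: Rle_trans (H2 t ht) _.
  have hpos : Defs.pos (fun i => y l i / y p i * t i).
    move=> i; have := ypos l hl i; have := ypos p hp i; have := ht i => *.
    apply: Rmult_lt_0_compat => //; apply: Rdiv_lt_0_compat => //.
  have := H1 _ hpos.
  have -> : (fun i => y j i / y l i * (y l i / y p i * t i)) = (fun i => y j i / y p i * t i) => //.
  apply: functional_extensionality => i; have := ypos l hl i; have := ypos p hp i => *.
  field; split; lra.
have tot : forall j l, (j <= k)%N -> (l <= k)%N -> ge j l \/ ge l j.
  move=> j l hj hl.
  have dpos : Defs.pos (fun i => y j i / y l i).
    move=> i; have := ypos l hl i; have := ypos j hj i => *; apply: Rdiv_lt_0_compat => //.
  have dpos' : Defs.pos (fun i => y l i / y j i).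
    move=> i; have := ypos l hl i; have := ypos j hj i => *; apply: Rdiv_lt_0_compat => //.
  have [sp _] := Hopt; have [wo [[wop _] [xo [yo [_ [sop _]]]]]] := sp.
  have [H1 H2] := HUn _ dpos.
  have [_ H2'] := HUn _ dpos'.
  have := H1 _ sop; rewrite /Rmax; case: Rle_dec => _ H.
  - right; move=> t ht; apply: (H2' _ t ht); exists sopt; split => //.
    suff -> : Dmul (fun i => y l i / y j i) sopt = Dinv (fun i => y j i / y l i) sopt by lra.
    rewrite /Dmul /Dinv; apply: functional_extensionality => i.
    have := ypos l hl i; have := ypos j hj i => *; field; split; lra.
  - left; apply: H2; exists sopt; split => //; lra.
have rf : forall j, (j <= k)%N -> ge j j.
  move=> j hj t ht.
  have -> : (fun i => y j i / y j i * t i) = t; last by lra.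
  apply: functional_extensionality => i; have := ypos j hj i => *; field; lra.
have mx : forall k', (k' <= k)%N -> exists j, (j <= k')%N /\ forall l, (l <= k')%N -> ge j l.
  elim=> [hk|k' IH hk'].
  - exists 0%N; split => //; move=> l; rewrite leqn0 => /eqP ->; exact: rf.
  - have [j [hj Hj]] := IH (ltnW hk').
    have hjk : (j <= k)%N by apply: leq_trans hj (ltnW hk').
    case: (tot j k'.+1 hjk hk') => H.
    + exists j; split; first exact: leqW hj.
      move=> l; rewrite leq_eqVlt => /orP [/eqP -> //| hl]; exact: Hj l hl.
    + exists k'.+1; split => //.
      move=> l; rewrite leq_eqVlt => /orP [/eqP ->| hl]; first exact: rf.
      apply: tr H (Hj l hl) => //.
      by apply: leq_trans (ltnW hl) hk'.
have [j [hj Hj]] := mx k (leqnn k).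
have [[wo [_ [xo [yo [Hxo [sop [_ _]]]]]]] Hmax] := Hopt.
have [Hxj [Hsj [HAy Hsy]]] := Hc j hj.
have vpos : Defs.pos (fun i => sopt i * y j i).
  move=> i; have := sop i; have := ypos j hj i => *; apply: Rmult_lt_0_compat => //.
have vW : inW (fun i => sopt i * y j i).
  split => //.
  rewrite (@center_sum _ _ A b xo (y j) sopt xo sopt HAy Hxo) -(@center_sum _ _ A b xo (y j) sopt (x j) (s j) HAy Hxj).
  have [_ <-] := Hw j hj; apply: sumR_ext => i; exact: Hsy.
exists (fun i => sopt i * y j i); split; last first.
  split => //; exists xo, (y j); split => //.
move=> l hl; split => //.
have [_ [_ [_ Hsyl]]] := Hc l hl.
have E : dot (fun i => g l i / y l i) (fun i => sopt i * y j i - w l i)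
   = dot (g l) (fun i => (y j i / y l i * sopt i) - s l i).
  rewrite /dot; apply: sumR_ext => i; rewrite -Hsyl.
  have := ypos l hl i => *; field; lra.
have tpos : Defs.pos (fun i => y j i / y l i * sopt i).
  move=> i; have := sop i; have := ypos j hj i; have := ypos l hl i => *.
  apply: Rmult_lt_0_compat => //; apply: Rdiv_lt_0_compat => //.
have sup := Hg l hl _ tpos.
have h1 := Hj l hl sopt sop.
have h2 : U (s l) <= U sopt.
  apply: Hmax; exists (w l); split; first exact: Hw.
  exists (x l), (y l); exact: Hc.
rewrite E; lra.
Qed.
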